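(* Let $(A\mid R)$ and $(A'\mid R')$ be finite presentations such that $(A'\mid R')$ is obtained from $(A\mid R)$ by one of the transformations (I)–(VII). Then $\langle A\mid R\rangle\cong\langle A'\mid R'\rangle$.
   Context: $\mathbb{M}_A$ is the free magma on a non-empty set $A$ (non-associative words with $x+y=(x,y)$); $\mathbb{M}_A^2$ has componentwise operation. A closed congruence on $\mathbb{M}_A$ is an equivalence relation $\theta$ that is a submagma of $\mathbb{M}_A^2$ and satisfies: $(x+x',y+y')\in\theta\Rightarrow (x,y),(x',y')\in\theta$. For $X\subseteq\mathbb{M}_A^2$, $\boxminus(X)$ is the least closed congruence containing $X$. A finite presentation is $(A\mid R)$ with $A$ finite non-empty and $R\subseteq\mathbb{M}_A^2$ finite; $\langle A\mid R\rangle=\mathbb{M}_A/\boxminus(R)$. The minimal generating set of $\mathbb{M}_A^2$ is $\mathcal{G}(\mathbb{M}_A^2)=(A\times\mathbb{M}_A)\cup(\mathbb{M}_A\times A)$; for $p\in\mathbb{M}_A^2$, $\mathbf{g}(p)$ is defined recursively: $\mathbf{g}(p)=\mathbf{g}(p_1)\cup\mathbf{g}(p_2)$ if $p=p_1+p_2$ with $p_1,p_2\in\mathbb{M}_A^2$ (i.e. both coordinates of $p$ are decomposable), and $\mathbf{g}(p)=\{p\}$ otherwise; for a set $S$, $\mathbf{g}(S)=\bigcup_{p\in S}\mathbf{g}(p)$. For $y\in\mathbb{M}_A$, $g(y)\subseteq A$ is the set of letters occurring in $y$. For $a\in A$, $y\in\mathbb{M}_A$, $f_{a\to y}:\mathbb{M}_A\to\mathbb{M}_A$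 is the homomorphism sending $a\mapsto y$ and fixing other generators, and $f^2_{a\to y}$ applies it to both coordinates of each pair of a set. The transformations are: (I) if some $(x,y)\in R$ is not in $\mathcal{G}(\mathbb{M}_A^2)$, replace by $(A\mid\mathbf{g}(R))$. (II) if $(a,y),(a,y')\in R\cap(A\times(\mathbb{M}_A\setminus A))$ with $y\neq y'$, replace by $(A\mid (R\setminus\{(a,y')\})\cup\mathbf{g}((y,y')))$. (III) if $(x,b),(x',b)\in R\cap((\mathbb{M}_A\setminus A)\times A)$ with $x\neq x'$, replace by $(A\mid (R\setminus\{(x',b)\})\cup\mathbf{g}((x,x')))$. (IV) if some $(x,y)\in R$ has $x\notin A$, replace by $(A\mid (R\setminus\{(x,y)\})\cup\{(y,x)\})$. (V) if some $a\in A$ has $(a,y)\notin R$ for all $y\in\mathbb{M}_A$ and $(a,a)\notin R$, replace by $(A\mid R\cup\{(a,a)\})$. (VI) if $(a,y),(a',y)\in R\cap(A\times\mathbb{M}_A)$ with $a\neq a'$, replace by $(A\setminus\{a'\}\mid f^2_{a'\to a}(R\setminus\{(a',y)\}))$. (VII) if some $(a,y)\in R\cap(A\times\mathbb{M}_A)$ has $a\notin g(y)$ and $(a,y')\notin R$ for every $y'\neq y$, replace by $(A\setminus\{a\}\mid f^2_{a\to y}(R))$. *)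

(* Defs.v *)
From mathcomp Require Import all_boot.
From mathcomp Require Import boolp classical_sets cardinality.
Set Implicit Arguments. Unset Strict Implicit. Unset Printing Implicit Defensive.
Local Open Scope classical_set_scope.

Inductive word (T : Type) : Type :=
  | Var : T -> word T
  | Op  : word T -> word T -> word T.   (* Op x y = (x, y) = x + y *)
Arguments Var {T}. Arguments Op {T}.

Section Words.
Variable T : eqType.

Fixpoint letters (w : word T) : set T :=
  match w with Var b => [set b] | Op u v => letters u `|` letters v end.

Definition inM (A : set T) (w : word T) : Prop := letters w `<=` A.
Definition inM2 (A : set T) (p : word T * word T) : Prop := inM A p.1 /\ inM A p.2.

Definition isVar (w : word T) : Prop := exists b, w = Var b.

Definition inG (A : set T) (p : word T * word T) : Prop :=
  (exists2 a, A a & p.1 = Var a) /\ inM A p.2 \/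
  inM A p.1 /\ (exists2 a, A a & p.2 = Var a).

Definition closed_congr (A : set T) (th : set (word T * word T)) : Prop :=
  [/\ th `<=` inM2 A,
      (forall x, inM A x -> th (x, x)),
      (forall x y, th (x, y) -> th (y, x)) &
      (forall x y z, th (x, y) -> th (y, z) -> th (x, z))] /\
  (forall x y x' y', th (x, y) -> th (x', y') -> th (Op x x', Op y y')) /\
  (forall x y x' y', th (Op x x', Op y y') -> th (x, y) /\ th (x', y')).

Definition boxminus (A : set T) (X : set (word T * word T)) : set (word T * word T) :=
  fun p => forall th, closed_congr A th -> X `<=` th -> th p.

Fixpoint gpair (x y : word T) {struct x} : set (word T * word T) :=
  match x, y with
  | Op x1 x2, Op y1 y2 => gpair x1 y1 `|` gpair x2 y2
  | _, _ => [set (x, y)]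
  end.
Definition gp (p : word T * word T) := gpair p.1 p.2.
Definition gset (S : set (word T * word T)) : set (word T * word T) :=
  \bigcup_(p in S) gp p.

Fixpoint subst (a : T) (y : word T) (w : word T) : word T :=
  match w with
  | Var b => if b == a then y else Var b
  | Op u v => Op (subst a y u) (subst a y v)
  end.
Definition subst2 (a : T) (y : word T) (S : set (word T * word T)) :=
  [set (subst a y p.1, subst a y p.2) | p in S].

Definition fin_pres (A : set T) (R : set (word T * word T)) : Prop :=
  [/\ finite_set A, A !=set0, finite_set R & R `<=` inM2 A].

Definition step (A : set T) (R : set (word T * word T))
    (A' : set T) (R' : set (word T * word T)) : Prop :=
  (* (I) *)
  ((exists2 p, R p & ~ inG A p) /\ A' = A /\ R' = gset R) \/
  (* (II) *)
  (exists a y y', [/\ R (Var a, y), R (Var a, y'), ~ isVar y, ~ isVar y' & y <> y'] /\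
      A' = A /\ R' = (R `\ (Var a, y')) `|` gp (y, y')) \/
  (* (III) *)
  (exists x x' b, [/\ R (x, Var b), R (x', Var b), ~ isVar x, ~ isVar x' & x <> x'] /\
      A' = A /\ R' = (R `\ (x', Var b)) `|` gp (x, x')) \/
  (* (IV) *)
  (exists x y, [/\ R (x, y), ~ isVar x, A' = A & R' = (R `\ (x, y)) `|` [set (y, x)]]) \/
  (* (V) *)
  (exists a, [/\ A a, (forall y, ~ R (Var a, y)), ~ R (Var a, Var a),
      A' = A & R' = R `|` [set (Var a, Var a)]]) \/
  (* (VI) *)
  (exists a a' y, [/\ R (Var a, y), R (Var a', y), a <> a',
      A' = A `\ a' & R' = subst2 a' (Var a) (R `\ (Var a', y))]) \/
  (* (VII) *)
  (exists a y, [/\ R (Var a, y), ~ letters y a, (forall y', y' <> y -> ~ R (Var a, y')),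
      A' = A `\ a & R' = subst2 a y R]).

End Words.

Record magma := Magma { mcarrier :> Type; mop : mcarrier -> mcarrier -> mcarrier }.

Definition magma_iso (M N : magma) : Prop :=
  exists f : M -> N, bijective f /\ forall u v, f (mop u v) = mop (f u) (f v).

Section Quotient.
Variable T : eqType.
Variables (A : set T) (th : set (word T * word T)).

Definition cls (x : word T) : set (word T) := [set y | th (x, y)].
Definition qcarrier := {S : set (word T) | exists x, inM A x /\ S = cls x}.

Definition qrep (S : qcarrier) : word T := projT1 (cid (projT2 S)).
Lemma qrepP (S : qcarrier) : inM A (qrep S) /\ sval S = cls (qrep S).
Proof. exact: (projT2 (cid (projT2 S))). Qed.

Lemma inM_Op x y : inM A x -> inM A y -> inM A (Op x y).
Proof. by move=> hx hy z [/hx|/hy]. Qed.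

Definition qop (S S' : qcarrier) : qcarrier :=
  exist _ (cls (Op (qrep S) (qrep S')))
    (ex_intro _ (Op (qrep S) (qrep S'))
       (conj (inM_Op (qrepP S).1 (qrepP S').1) erefl)).

Definition quot_magma : magma := Magma qop.
End Quotient.

Definition pres_magma (T : eqType) (A : set T) (R : set (word T * word T)) : magma :=
  quot_magma A (boxminus A R).

(* Main.v *)
Require Import Defs.
From mathcomp Require Import all_boot.
From mathcomp Require Import boolp classical_sets cardinality.
Set Implicit Arguments. Unset Strict Implicit. Unset Printing Implicit Defensive.
Local Open Scope classical_set_scope.

Section Gen.
Variable T : eqType.
Implicit Types (A : set T) (th : set (word T * word T)).

Lemma cls_eq A th x z : closed_congr A th -> th (x, z) -> cls th x = cls th z.
Proof.
case=> [[_ _ hs ht] _] h; apply: funext => w; apply: propext; rewrite /cls /=; split.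
- by move=> h'; apply: ht (hs _ _ h) h'.
- by move=> h'; apply: ht h h'.
Qed.

Lemma cls_eqP A th x z : closed_congr A th -> inM A z -> cls th x = cls th z -> th (x, z).
Proof.
case=> [[_ hr _ _] _] hz e.
have : cls th z z by exact: hr.
by rewrite -e.
Qed.

Lemma qeq A th (S S' : qcarrier A th) : sval S = sval S' -> S = S'.
Proof.
case: S => s ps; case: S' => s' ps' /= e; subst s'.
by rewrite (Prop_irrelevance ps ps').
Qed.

Lemma iso_gen A A' th th' (phi : word T -> word T) :
  closed_congr A th -> closed_congr A' th' ->
  (forall x, inM A x -> inM A' (phi x)) ->
  (forall u v, phi (Op u v) = Op (phi u) (phi v)) ->
  (forall x z, inM A x -> inM A z -> th (x, z) <-> th' (phi x, phi z)) ->
  (forall w, inM A' w -> exists2 x, inM A x & th' (phi x, w)) ->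
  magma_iso (quot_magma A th) (quot_magma A' th').
Proof.
move=> cc cc' hM hop heq hs.
have cc0 := cc; have cc0' := cc'.
case: cc0 => [[hin hr hsy htr] [hc hk]].
case: cc0' => [[hin' hr' hsy' htr'] [hc' hk']].
pose F (S : qcarrier A th) : qcarrier A' th' :=
  exist _ (cls th' (phi (qrep S)))
    (ex_intro _ (phi (qrep S)) (conj (hM _ (qrepP S).1) erefl)).
pose g (S' : qcarrier A' th') : qcarrier A th :=
  let s := cid2 (hs (qrep S') (qrepP S').1) in
  exist _ (cls th (sval s)) (ex_intro _ (sval s) (conj (svalP s).1 erefl)).
exists F; split.
  exists g.
  - move=> S; apply: qeq => /=.
    case: cid2 => x /= hx hx'.
    set r1 := qrep (F S).
    have [hr1 e1] := qrepP (F S).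
    rewrite /= -/r1 in e1.
    have [hrS eS] := qrepP S.
    rewrite eS; apply: (cls_eq cc).
    have h1 : th' (phi (qrep S), r1) by apply: (cls_eqP cc' hr1 e1).
    apply/(heq _ _ hx hrS).
    by apply: htr' hx' (hsy' _ _ h1).
  - move=> S'; apply: qeq.
    have [hr2 e2] := qrepP (g S').
    rewrite /g /= in e2 *.
    set s := cid2 _ in e2 *.
    have [hx hx'] := svalP s.
    have [hw ew] := qrepP S'.
    rewrite ew; apply: (cls_eq cc').
    have h2 := cls_eqP cc hr2 e2.
    have h3 := (heq _ _ hx hr2).1 h2.
    by apply: htr' (hsy' _ _ h3) hx'.
move=> S S'; apply: qeq => /=.
set r := qrep (qop S S').
have [hrr er] := qrepP (qop S S'); rewrite /= -/r in er.
have [hrS _] := qrepP S; have [hrS' _] := qrepP S'.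
have h0 := cls_eqP cc hrr er.
have h1 : th' (Op (phi (qrep S)) (phi (qrep S')), phi r).
  by rewrite -hop; apply/heq => //; apply: inM_Op.
have [hq1 eq1] := qrepP (F S); have [hq2 eq2] := qrepP (F S').
rewrite /= in eq1 eq2.
have k1 := cls_eqP cc' hq1 eq1; have k2 := cls_eqP cc' hq2 eq2.
apply: (cls_eq cc').
apply: htr' (hsy' _ _ h1) _.
by apply: hc'.
Qed.

End Gen.
Section Cases.
Variable T : eqType.
Implicit Types (A : set T) (th R : set (word T * word T)).

Lemma cc_full A : closed_congr A (inM2 A).
Proof.
split; [split|split].
- by [].
- by move=> x hx.
- by move=> x y [].
- by move=> x y z [] ? _ [] _ ?.
- by move=> x y x' y' [hx hy] [hx' hy']; split; apply: inM_Op.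
- move=> x y x' y' [hx hy]; split; split => z hz.
  + by apply: hx; left.
  + by apply: hy; left.
  + by apply: hx; right.
  + by apply: hy; right.
Qed.

Lemma bm_cc A R : R `<=` inM2 A -> closed_congr A (boxminus A R).
Proof.
move=> hR; split; [split|split].
- by move=> p hp; apply: hp (cc_full A) hR.
- by move=> x hx th [[_ hr _ _] _] _; apply: hr.
- by move=> x y h th cc hs; case: (cc) => [[_ _ hsy _] _]; apply: hsy (h th cc hs).
- by move=> x y z h1 h2 th cc hs; case: (cc) => [[_ _ _ ht] _]; apply: ht (h1 th cc hs) (h2 th cc hs).
- by move=> x y x' y' h1 h2 th cc hs; case: (cc) => [_ [hc _]]; apply: hc (h1 th cc hs) (h2 th cc hs).
- move=> x y x' y' h; split => th cc hs; case: (cc) => [_ [_ hk]];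
    by have [] := hk _ _ _ _ (h th cc hs).
Qed.

Lemma bm_sub A R : R `<=` boxminus A R.
Proof. by move=> p hp th _ hs; apply: hs. Qed.

Lemma bm_min A R th : closed_congr A th -> R `<=` th -> boxminus A R `<=` th.
Proof. by move=> cc hs p hp; apply: hp. Qed.

Lemma gpair_sub A th x y : closed_congr A th -> th (x, y) -> gpair x y `<=` th.
Proof.
move=> cc; case: (cc) => [_ [_ hk]].
elim: x y => [b|x1 IH1 x2 IH2] [c|y1 y2] //= h q; try by move=> ->.
have [h1 h2] := hk _ _ _ _ h.
by case=> [/(IH1 _ h1)|/(IH2 _ h2)].
Qed.

Lemma gpair_th A th x y : closed_congr A th -> gpair x y `<=` th -> th (x, y).
Proof.
move=> cc; case: (cc) => [_ [hc _]].
elim: x y => [b|x1 IH1 x2 IH2] [c|y1 y2] //= h; try by apply: h.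
by apply: hc; [apply: IH1 | apply: IH2] => q hq; apply: h; [left|right].
Qed.

Lemma same_A A R R' : R `<=` inM2 A -> R' `<=` inM2 A ->
  R `<=` boxminus A R' -> R' `<=` boxminus A R ->
  magma_iso (pres_magma A R) (pres_magma A R').
Proof.
move=> hR hR' h1 h2.
have cc := bm_cc hR; have cc' := bm_cc hR'.
apply: (@iso_gen _ A A _ _ id cc cc') => //.
- move=> x z hx hz; split.
  + by apply: bm_min cc' h1 (x, z).
  + by apply: bm_min cc h2 (x, z).
- move=> w hw; exists w => //.
  by case: cc' => [[_ hr _ _] _]; apply: hr.
Qed.

End Cases.
Section Subst.
Variable T : eqType.
Implicit Types (A : set T) (th R : set (word T * word T)).

Lemma inM_Op_inv A x y : inM A (Op x y) -> inM A x /\ inM A y.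
Proof. by move=> h; split => z hz; apply: h; [left|right]. Qed.

Lemma cc_restr A A' th : closed_congr A th -> A' `<=` A ->
  closed_congr A' (fun p => th p /\ inM2 A' p).
Proof.
move=> cc sA; case: (cc) => [[hin hr hs ht] [hc hk]].
split; [split|split].
- by move=> p [].
- move=> x hx; split; last by [].
  by apply: hr => z hz; apply: sA; apply: hx.
- by move=> x y [h [h1 h2]]; split; [apply: hs|].
- by move=> x y z [h [h1 _]] [h' [_ h2]]; split; [apply: ht h h'|].
- move=> x y x' y' [h [h1 h2]] [h' [h1' h2']]; split; first by apply: hc.
  by split; apply: inM_Op.
- move=> x y x' y' [h [/inM_Op_inv[h1 h1'] /inM_Op_inv[h2 h2']]].
  by have [k k'] := hk _ _ _ _ h.
Qed.

Lemma cc_pull A A' th' (phi : word T -> word T) : closed_congr A' th' ->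
  (forall x, inM A x -> inM A' (phi x)) ->
  (forall u v, phi (Op u v) = Op (phi u) (phi v)) ->
  closed_congr A (fun p => inM2 A p /\ th' (phi p.1, phi p.2)).
Proof.
move=> cc hM hop; case: (cc) => [[hin hr hs ht] [hc hk]].
split; [split|split].
- by move=> p [].
- by move=> x hx; split; [|apply: hr; apply: hM].
- by move=> x y [[h1 h2] h]; split; [|apply: hs].
- by move=> x y z [[h1 _] h] [[_ h2] h']; split; [|apply: ht h h'].
- move=> x y x' y' [[h1 h2] h] [[h1' h2'] h'] /=; split.
    by split; apply: inM_Op.
  by rewrite !hop; apply: hc.
- move=> x y x' y' [[/inM_Op_inv[h1 h1'] /inM_Op_inv[h2 h2']]] /=.
  rewrite !hop => /hk [k k'].
  by split; split.
Qed.

Lemma subst_inM A a u x : inM (A `\ a) u -> inM A x -> inM (A `\ a) (subst a u x).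
Proof.
move=> hu; elim: x => [b|x1 IH1 x2 IH2] /=.
- case: eqP => [_ //|nb] hb z ->; split; first by apply: hb.
  by move=> /= e; apply: nb.
- by move=> /inM_Op_inv[h1 h2]; apply: inM_Op; [apply: IH1|apply: IH2].
Qed.

Lemma subst_id A a u x : inM (A `\ a) x -> subst a u x = x.
Proof.
elim: x => [b|x1 IH1 x2 IH2] /=.
- move=> h; case: eqP => // e; subst b.
  by have [_ /(_ erefl)] := h a erefl.
- by move=> /inM_Op_inv[h1 h2]; rewrite IH1 // IH2.
Qed.

Lemma subst_th A th a u x : closed_congr A th -> th (Var a, u) -> inM A x ->
  th (x, subst a u x).
Proof.
move=> cc hau; case: (cc) => [[hin hr hs ht] [hc hk]].
elim: x => [b|x1 IH1 x2 IH2] /=.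
- by case: eqP => [-> //|_] hb; apply: hr.
- by move=> /inM_Op_inv[h1 h2]; apply: hc; [apply: IH1|apply: IH2].
Qed.

Lemma subst_case A R R' a u :
  R `<=` inM2 A -> R' `<=` inM2 (A `\ a) ->
  boxminus A R (Var a, u) -> inM (A `\ a) u ->
  (forall p, R p -> boxminus (A `\ a) R' (subst a u p.1, subst a u p.2)) ->
  R' `<=` boxminus A R ->
  magma_iso (pres_magma A R) (pres_magma (A `\ a) R').
Proof.
move=> hR hR' hau hu himg hR'R.
have sA : A `\ a `<=` A by move=> z [].
have cc := bm_cc hR; have cc' := bm_cc hR'.
have hM := subst_inM (A := A) hu.
have hop : forall u0 v, subst a u (Op u0 v) = Op (subst a u u0) (subst a u v) by [].
case: (cc) => [[hin hr hs ht] _].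
apply: (@iso_gen _ A (A `\ a) _ _ (subst a u) cc cc' hM hop).
- move=> x z hx hz; split.
  + move=> h.
    have := bm_min (cc_pull cc' hM hop) _ h.
    case; last by [].
    by move=> p hp; split; [apply: hR|apply: himg].
  + move=> h.
    have h' := bm_min (cc_restr cc sA) _ h.
    have [k _] : boxminus A R (subst a u x, subst a u z) /\ inM2 (A `\ a) (subst a u x, subst a u z).
      by apply: h' => p hp; split; [apply: hR'R|apply: hR'].
    apply: (ht _ _ _ (subst_th cc hau hx)).
    exact: (ht _ _ _ k (hs _ _ (subst_th cc hau hz))).
- move=> w hw; exists w; first by move=> z hz; apply: sA; apply: hw.
  rewrite (subst_id u hw).
  by case: cc' => [[_ hr' _ _] _]; apply: hr'.
Qed.

End Subst.
Theorem lemma7p7 (T : eqType) (A A' : set T) (R R' : set (word T * word T)) :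
  fin_pres A R -> fin_pres A' R' -> step A R A' R' ->
  magma_iso (pres_magma A R) (pres_magma A' R').
Proof.
case=> _ _ _ hR; case=> _ _ _ hR'.
case=> [[_ [eA eR]]|]; [subst A'|].
-
  have cc := bm_cc hR; have cc' := bm_cc hR'.
  apply: same_A => //.
  + move=> [p1 p2] hp; apply: (gpair_th cc') => q hq; apply: bm_sub.
    by rewrite eR; exists (p1, p2).
  + move=> q; rewrite eR => -[[p1 p2] hp hq].
    exact: (gpair_sub cc (bm_sub hp) hq).
case=> [[a [y [y' [[h1 h2 _ _ ne] [eA eR]]]]]|]; [subst A'|].
-
  have cc := bm_cc hR; have cc' := bm_cc hR'.
  case: (cc) => [[_ _ hs ht] _]; case: (cc') => [[_ _ hs' ht'] _].
  have hyy' : boxminus A R' (y, y').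
    by apply: (gpair_th cc') => q hq; apply: bm_sub; rewrite eR; right.
  apply: same_A => //.
  + move=> p hp; have [-> | np] := pselect (p = (Var a, y')).
      apply: (ht' _ _ _ _ hyy'); apply: bm_sub; rewrite eR; left; split => //.
      by case=> e; apply: ne.
    by apply: bm_sub; rewrite eR; left; split.
  + move=> q; rewrite eR => -[[hq _]|hq]; first by apply: bm_sub.
    apply: (gpair_sub cc _ hq).
    exact: (ht _ _ _ (hs _ _ (bm_sub h1)) (bm_sub h2)).
case=> [[x [x' [b [[h1 h2 _ _ ne] [eA eR]]]]]|]; [subst A'|].
-
  have cc := bm_cc hR; have cc' := bm_cc hR'.
  case: (cc) => [[_ _ hs ht] _]; case: (cc') => [[_ _ hs' ht'] _].
  have hxx' : boxminus A R' (x, x').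
    by apply: (gpair_th cc') => q hq; apply: bm_sub; rewrite eR; right.
  apply: same_A => //.
  + move=> p hp; have [-> | np] := pselect (p = (x', Var b)).
      apply: (ht' _ _ _ (hs' _ _ hxx')); apply: bm_sub; rewrite eR; left; split => //.
      by case=> e; apply: ne.
    by apply: bm_sub; rewrite eR; left; split.
  + move=> q; rewrite eR => -[[hq _]|hq]; first by apply: bm_sub.
    apply: (gpair_sub cc _ hq).
    exact: (ht _ _ _ (bm_sub h1) (hs _ _ (bm_sub h2))).
case=> [[x [y [h1 _ eA eR]]]|]; [subst A'|].
-
  have cc := bm_cc hR; have cc' := bm_cc hR'.
  case: (cc) => [[_ _ hs ht] _]; case: (cc') => [[_ _ hs' ht'] _].
  apply: same_A => //.
  + move=> p hp; have [-> | np] := pselect (p = (x, y)).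
      by apply: hs'; apply: bm_sub; rewrite eR; right.
    by apply: bm_sub; rewrite eR; left; split.
  + move=> q; rewrite eR => -[[hq _]|->]; first by apply: bm_sub.
    by apply: hs; apply: bm_sub.
case=> [[a [ha _ _ eA eR]]|]; [subst A'|].
-
  have cc := bm_cc hR.
  case: (cc) => [[_ hr _ _] _].
  apply: same_A => //.
  + by move=> p hp; apply: bm_sub; rewrite eR; left.
  + move=> q; rewrite eR => -[hq|->]; first by apply: bm_sub.
    by apply: hr => z ->.
case=> [[a [a' [y [h1 h2 ne eA eR]]]]|[a [y [h1 hy _ eA eR]]]]; subst A'.
-
  have cc := bm_cc hR.
  case: (cc) => [[_ _ hs ht] _].
  have ina : A a by have [ha _] := hR _ h1; apply: ha.
  apply: (subst_case (u := Var a) hR hR').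
  + exact: (ht _ _ _ (bm_sub h2) (hs _ _ (bm_sub h1))).
  + by move=> z ->; split => // e; apply: ne.
  + move=> p hp; apply: bm_sub; rewrite eR.
    have [e | np] := pselect (p = (Var a', y)).
      exists (Var a, y); first by split => // -[e']; apply: ne.
      by rewrite e /= eqxx; case: (a == a').
    by exists p.
  + move=> q; rewrite eR => -[[p1 p2] [hp _] <-].
    have [hp1 hp2] := hR _ hp.
    have k := bm_sub (A := A) hp.
    have s1 := subst_th (u := Var a) cc (ht _ _ _ (bm_sub h2) (hs _ _ (bm_sub h1))) hp1.
    have s2 := subst_th (u := Var a) cc (ht _ _ _ (bm_sub h2) (hs _ _ (bm_sub h1))) hp2.
    rewrite /=; exact: (ht _ _ _ (hs _ _ s1) (ht _ _ _ k s2)).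
-
  have cc := bm_cc hR.
  case: (cc) => [[_ _ hs ht] _].
  have [ha hyA] := hR _ h1.
  apply: (subst_case (u := y) hR hR').
  + exact: bm_sub.
  + by move=> z hz; split; [apply: hyA|move=> /= e; subst z].
  + by move=> p hp; apply: bm_sub; rewrite eR; exists p.
  + move=> q; rewrite eR => -[[p1 p2] hp <-].
    have [hp1 hp2] := hR _ hp.
    have k := bm_sub (A := A) hp.
    have s1 := subst_th cc (bm_sub h1) hp1.
    have s2 := subst_th cc (bm_sub h1) hp2.
    rewrite /=; exact: (ht _ _ _ (hs _ _ s1) (ht _ _ _ k s2)).
Qed.
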